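(* Let $n\ge2$, $q_1,q_2\in\mathbb{C}$ with $q_1q_2\ne0$ and $q_1\ne q_2$, and $q=-q_2/q_1$. Let $J=\mathrm{diag}(1,q,\dots,q^{n-1})$ and, for $1\le i\le n-1$, $S_i=\frac{1}{q_1-q_2}\bigl(2\beta_i-(q_1+q_2)I_n\bigr)$, where $\beta_i$ is the matrix of $T_i$ on $\mathbf{E}$. Then $S_i^{\mathsf T}JS_i=J$ (so $S_i$ preserves the form $\langle-,-\rangle$). Moreover, with $f_0=e_1+\cdots+e_n$, $f_i=q_2e_i+q_1e_{i+1}$ and $\mathbf{L}^\perp=\{v\in\mathbf{E}:\langle v,f_0\rangle=0\}$, for each $i=1,\dots,n-1$: (a) $S_if_0=f_0$; (b) $f_i\in\mathbf{L}^\perp$; (c) $\mathbf{L}^\perp$ is an $H_n(q_1,q_2)$-submodule of $\mathbf{E}$; (d) $\mathbf{F}=\mathbf{L}^\perp$, where $\mathbf{F}=\mathrm{span}(f_1,\dots,f_{n-1})$.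
   Context: The Iwahori--Hecke algebra $H_n(q_1,q_2)$ is generated by $T_1,\dots,T_{n-1}$ subject to $T_iT_{i+1}T_i=T_{i+1}T_iT_{i+1}$, $T_iT_j=T_jT_i$ ($|i-j|>1$) and $(T_i-q_1)(T_i-q_2)=0$. It acts on $\mathbf{E}=\mathbb{C}^n$ (basis $e_1,\dots,e_n$) by $T_ie_j=q_1e_j$ ($j\ne i,i+1$), $T_ie_{i+1}=-q_2e_i$, $T_ie_i=(q_1+q_2)e_i+q_1e_{i+1}$ (generalized Burau representation). The symmetric bilinear form on $\mathbf{E}$ is $\langle e_i,e_j\rangle=\delta_{ij}q^{j-1}$, with Gram matrix $J$. *)

(* Defs.v *)
From HB Require Import structures.
From mathcomp Require Import all_boot all_order all_algebra.
From mathcomp Require Import reals.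
From mathcomp Require Import complex.
Set Implicit Arguments. Unset Strict Implicit. Unset Printing Implicit Defensive.
Import Order.TTheory GRing.Theory Num.Theory.
Local Open Scope ring_scope.

Section Burau.
Variables (R : realType).
Local Notation C := R[i].
Variables (q1 q2 : C) (n : nat).

(* Indices are 0-based: basis vector e_{k+1} of the paper is the k-th
   standard column vector, and generator T_{i+1} of the paper is
   [burau i] for i < n-1. *)

(* matrix beta_i of T_i on E = C^n, in the column convention:
   column c holds the coordinates of T_i e_c. *)
Definition burau (i : nat) : 'M[C]_n :=
  \matrix_(r, c)
    if (c == i :> nat) then
      (if (r == i :> nat) then q1 + q2 else if (r == i.+1 :> nat) then q1 else 0)
    else if (c == i.+1 :> nat) then
      (if (r == i :> nat) then - q2 else 0)
    else (if r == c then q1 else 0).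

Definition qpar : C := - q2 / q1.

Definition Jmat : 'M[C]_n := diag_mx (\row_(j < n) qpar ^+ j).

Definition form (v w : 'cV[C]_n) : C := (v^T *m Jmat *m w) ord0 ord0.

Definition Smat (i : nat) : 'M[C]_n :=
  (q1 - q2)^-1 *: (2%:R *: burau i - (q1 + q2) *: 1%:M).

Definition f0 : 'cV[C]_n := const_mx 1.

(* f_{i+1} = q2 e_{i+1} + q1 e_{i+2} (paper indexing), 0-based here *)
Definition fvec (i : nat) : 'cV[C]_n :=
  \col_(r < n) (if (r == i :> nat) then q2 else if (r == i.+1 :> nat) then q1 else 0).

Definition Lperp (v : 'cV[C]_n) : Prop := form v f0 = 0.

End Burau.

(* Main.v *)
Require Import Defs.
From HB Require Import structures.
From mathcomp Require Import all_boot all_order all_algebra.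
From mathcomp Require Import reals complex.
From mathcomp Require Import ring.
Import Order.TTheory GRing.Theory Num.Theory.
Local Open Scope ring_scope.

Section H.
Variable R : realType.
Local Notation C := R[i].
Variables (q1 q2 : C) (n : nat).
Hypotheses (hq1 : q1 != 0) (hq2 : q2 != 0) (hq12 : q1 - q2 != 0).
Variables (i : nat) (hi : (i.+1 < n)%N).

Local Notation S := (Smat q1 q2 n i).
Local Notation B := (burau q1 q2 n i).
Local Notation q := (qpar q1 q2).

Definition I : 'I_n := Ordinal (ltnW hi).
Definition I1 : 'I_n := Ordinal hi.

Lemma sum1 (F : 'I_n -> C) a : (forall k, k != a -> F k = 0) -> \sum_k F k = F a.
Proof. by move=> h; rewrite (bigD1 a) //= big1 ?addr0 // => k /h. Qed.

Lemma sum2 (F : 'I_n -> C) a b : a != b ->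
  (forall k, k != a -> k != b -> F k = 0) -> \sum_k F k = F a + F b.
Proof.
move=> ab h; rewrite (bigD1 a) //= (bigD1 b) /= 1?eq_sym //.
by rewrite big1 ?addr0 ?addrA // => k /andP[kb ka]; apply: h.
Qed.

Definition out (k : 'I_n) := ((k : nat) != i) && ((k : nat) != i.+1).

Lemma outP k : k != I -> k != I1 -> out k.
Proof. by move=> a b; apply/andP; split; [move: a; rewrite -val_eqE | move: b; rewrite -val_eqE]. Qed.

Lemma tri (k : 'I_n) : [\/ k = I, k = I1 | out k].
Proof.
case: (eqVneq k I) => [->|kI]; first by apply: Or31.
case: (eqVneq k I1) => [->|kI1]; first by apply: Or32.
by apply: Or33; apply: outP.
Qed.

Lemma II1 : (I == I1) = false.
Proof. by rewrite /I /I1 -val_eqE /= ltn_eqF. Qed.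
Lemma I1I : (I1 == I) = false.
Proof. by rewrite eq_sym II1. Qed.

Lemma SE r c : S r c = (q1 - q2)^-1 * (2%:R * B r c - (q1 + q2) * (r == c)%:R).
Proof. by rewrite /Smat !mxE. Qed.

Lemma B_colout r c : out c -> B r c = (r == c)%:R * q1.
Proof.
case/andP=> c1 c2; rewrite /burau mxE (negbTE c1) (negbTE c2).
by case: (r == c); rewrite ?mul1r ?mul0r.
Qed.

Lemma B_rowout r c : out r -> B r c = (r == c)%:R * q1.
Proof.
move=> hr; case: (tri c) => [->|->|hc]; last exact: B_colout.
- case/andP: hr => r1 r2; rewrite /burau mxE /I /I1 /= eqxx (negbTE r1) (negbTE r2).
  have -> : (r == I) = false by apply/negbTE; rewrite -val_eqE.
  by rewrite mul0r.
- case/andP: hr => r1 r2; rewrite /burau mxE /I /I1 /= eqxx (negbTE r1) gtn_eqF //.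
  have -> : (r == I1) = false by apply/negbTE; rewrite -val_eqE.
  by rewrite mul0r.
Qed.

Lemma S_colout r c : out c -> S r c = (r == c)%:R.
Proof. move=> h; rewrite SE B_colout //; case: (r == c) => /=; field; exact: hq12. Qed.

Lemma S_rowout r c : out r -> S r c = (r == c)%:R.
Proof. move=> h; rewrite SE B_rowout //; case: (r == c) => /=; field; exact: hq12. Qed.

Lemma BII : B I I = q1 + q2. Proof. by rewrite /burau mxE /I /I1 /= eqxx. Qed.
Lemma BII1 : B I I1 = - q2. Proof. by rewrite /burau mxE /I /I1 /= ?(gtn_eqF (ltnSn i)) ?(ltn_eqF (ltnSn i)) ?eqxx. Qed.
Lemma BI1I : B I1 I = q1. Proof. by rewrite /burau mxE /I /I1 /= ?(gtn_eqF (ltnSn i)) ?(ltn_eqF (ltnSn i)) ?eqxx. Qed.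
Lemma BI1I1 : B I1 I1 = 0. Proof. by rewrite /burau mxE /I /I1 /= ?(gtn_eqF (ltnSn i)) ?(ltn_eqF (ltnSn i)) ?eqxx. Qed.

Lemma valI : (I : nat) = i. Proof. by []. Qed.
Lemma valI1 : (I1 : nat) = i.+1. Proof. by []. Qed.

Lemma SII : S I I = (q1 + q2) / (q1 - q2).
Proof. rewrite SE BII eqxx /= ?mulr1n ?mulr1; field; exact: hq12. Qed.
Lemma SII1 : S I I1 = - 2%:R * q2 / (q1 - q2).
Proof. rewrite SE BII1 II1 /= ?mulr0n ?mulr0; field; exact: hq12. Qed.
Lemma SI1I : S I1 I = 2%:R * q1 / (q1 - q2).
Proof. rewrite SE BI1I I1I /= ?mulr0n ?mulr0; field; exact: hq12. Qed.
Lemma SI1I1 : S I1 I1 = - (q1 + q2) / (q1 - q2).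
Proof. rewrite SE BI1I1 eqxx /= ?mulr1n ?mulr1; field; exact: hq12. Qed.

Lemma quadE (A : 'M[C]_n) a b :
  (A^T *m Jmat q1 q2 n *m A) a b = \sum_k A k a * q ^+ k * A k b.
Proof.
rewrite /Jmat mul_mx_diag mxE; apply: eq_bigr => k _; by rewrite !mxE.
Qed.

Lemma part1 : S^T *m Jmat q1 q2 n *m S = Jmat q1 q2 n.
Proof.
apply/matrixP => a b; rewrite quadE /Jmat mxE [in RHS]mxE.
have [ha|ha] := boolP (out a).
  rewrite (sum1 _ a) => [|k ka]; last by rewrite /= (S_colout _ _ ha) (negbTE ka) !mul0r.
  by rewrite (S_colout _ _ ha) eqxx (S_rowout _ _ ha) mul1r mulr_natr.
have [hb|hb] := boolP (out b).
  rewrite (sum1 _ b) => [|k kb]; last by rewrite /= (S_colout _ _ hb) (negbTE kb) mulr0.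
  rewrite (S_colout _ _ hb) eqxx (S_rowout _ _ hb) mulr1.
  case: (eqVneq a b) => [->|ab] /=; first by rewrite mul1r mulr1n.
  by rewrite !mulr0n mul0r.
have hs : forall c, ~~ out c -> c = I \/ c = I1.
  by move=> c; case: (tri c) => [->|->|->] //; [left|right].
rewrite (sum2 _ I I1) ?II1 // => [|k kI kI1]; last first.
  by case: (hs _ ha) => ->; rewrite /= (S_rowout _ _ (outP _ kI kI1)) ?(negbTE kI) ?(negbTE kI1) !mul0r.
have hq : q != 0 by rewrite /qpar mulf_neq0 ?oppr_eq0 ?invr_eq0.
case: (hs _ ha) => ->; case: (hs _ hb) => ->;
  rewrite ?SII ?SII1 ?SI1I ?SI1I1 ?eqxx ?II1 ?I1I ?mulr1n ?mulr0n !valI !valI1 exprS;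
  move: (q ^+ i) => Q; rewrite /qpar; field; by rewrite ?hq1 ?hq12.
Qed.


Lemma notout c : ~~ out c -> c = I \/ c = I1.
Proof. by case: (tri c) => [->|->|->] //; [left|right]. Qed.

Lemma mulf0E (A : 'M[C]_n) r : (A *m f0 R n) r 0 = \sum_k A r k.
Proof. rewrite mxE; apply: eq_bigr => k _; by rewrite mxE mulr1. Qed.

Lemma hq : q != 0.
Proof. by rewrite /qpar mulf_neq0 ?oppr_eq0 ?invr_eq0. Qed.

Lemma partA : S *m f0 R n = f0 R n.
Proof.
apply/matrixP => r z; rewrite [z]ord1 mulf0E [RHS]mxE.
have [hr|hr] := boolP (out r).
  rewrite (sum1 _ r) => [|k kr]; first by rewrite S_rowout // eqxx.
  by rewrite /= S_rowout // eq_sym (negbTE kr).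
case: (notout _ hr) => ->; rewrite (sum2 _ I I1) ?II1 // => [|k kI kI1];
  try by rewrite /= (S_colout _ _ (outP _ kI kI1)) eq_sym ?(negbTE kI) ?(negbTE kI1).
  rewrite SII SII1; field; exact: hq12.
rewrite SI1I SI1I1; field; exact: hq12.
Qed.

Lemma formE (v w : 'cV[C]_n) : Defs.form q1 q2 v w = \sum_k v k 0 * q ^+ k * w k 0.
Proof. rewrite /Defs.form /Jmat mul_mx_diag mxE; apply: eq_bigr => k _; by rewrite !mxE. Qed.

Lemma partB : Lperp q1 q2 (fvec q1 q2 n i).
Proof.
rewrite /Lperp formE (sum2 _ I I1) ?II1 // => [|k kI kI1]; last first.
  rewrite /= !mxE; case/andP: (outP _ kI kI1) => h1 h2.
  by rewrite (negbTE h1) (negbTE h2) !mul0r.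
rewrite !mxE !valI !valI1 eqxx (gtn_eqF (ltnSn i)) eqxx !mulr1 exprS.
move: (q ^+ i) => Q; rewrite /qpar; field; exact: hq1.
Qed.

Lemma colsum j : \sum_k B k j * q ^+ k = q1 * q ^+ j.
Proof.
have [hj|hj] := boolP (out j).
  rewrite (sum1 _ j) => [|k kj]; first by rewrite B_colout // eqxx mul1r.
  by rewrite /= B_colout // (negbTE kj) !mul0r.
case: (notout _ hj) => ->.
  rewrite (sum2 _ I I1) ?II1 // => [|k kI kI1]; last first.
    by rewrite /= B_rowout ?(outP _ kI kI1) // (negbTE kI) !mul0r.
  rewrite BII BI1I !valI !valI1 exprS.
  move: (q ^+ i) => Q; rewrite /qpar; field; exact: hq1.
rewrite (sum1 _ I) => [|k kI]; last first.
  case: (tri k) kI => [->|->|hk] kI /=; first by rewrite eqxx in kI.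
    by rewrite BI1I1 mul0r.
  have kI1 : k != I1 by case/andP: hk => _; rewrite -val_eqE.
  by rewrite B_rowout // (negbTE kI1) !mul0r.
rewrite BII1 !valI !valI1 exprS.
move: (q ^+ i) => Q; rewrite /qpar; field; exact: hq1.
Qed.

Lemma formMv (A : 'M[C]_n) (v : 'cV[C]_n) :
  Defs.form q1 q2 (A *m v) (f0 R n) = \sum_j v j 0 * \sum_k A k j * q ^+ k.
Proof.
rewrite formE; under eq_bigr => k _ do rewrite !mxE mulr1 mulr_suml.
rewrite exchange_big; apply: eq_bigr => j _; rewrite mulr_sumr.
by apply: eq_bigr => k _; ring.
Qed.

Lemma formf0 (v : 'cV[C]_n) : Defs.form q1 q2 v (f0 R n) = \sum_j v j 0 * q ^+ j.
Proof. rewrite formE; apply: eq_bigr => k _; by rewrite mxE mulr1. Qed.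

Lemma partC (v : 'cV[C]_n) : Lperp q1 q2 v -> Lperp q1 q2 (B *m v).
Proof.
rewrite /Lperp formMv formf0 => h.
under eq_bigr => j _ do rewrite colsum mulrCA.
by rewrite -mulr_sumr h mulr0.
Qed.

End H.

Section D.
Variable R : realType.
Local Notation C := R[i].
Variables (q1 q2 : C) (m : nat).
Hypotheses (hq1 : q1 != 0) (hq2 : q2 != 0).
Local Notation q := (qpar q1 q2).

Lemma L1 (F : nat -> C) r N :
  \sum_(0 <= k < N) (if r == k then F k else 0) = if (r < N)%N then F r else 0.
Proof.
elim: N => [|N IH]; first by rewrite big_geq // ltn0.
rewrite big_nat_recr //= IH.
case: (eqVneq r N) => [->|rN] /=; first by rewrite ltnn ltnSn add0r.
by rewrite addr0 ltnS (leq_eqVlt r N) (negbTE rN).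
Qed.

Lemma L2 (F : nat -> C) r N :
  \sum_(0 <= k < N) (if r == k.+1 then F k else 0) =
  if (0 < r <= N)%N then F r.-1 else 0.
Proof.
elim: N => [|N IH]; first by rewrite big_geq //; case: r => [|r] //=; rewrite ltn0 andbF.
rewrite big_nat_recr //= IH.
case: (eqVneq r N.+1) => [->|rN] /=; first by rewrite ltnn leqnn add0r.
by rewrite addr0 (leq_eqVlt r N.+1) (negbTE rN) ltnS.
Qed.

Lemma scE (a : C) (w : 'cV[C]_(m.+2)) j : (a *: w) j 0 = a * w j 0.
Proof. by rewrite mxE. Qed.

Lemma partD2 (v : 'cV[C]_(m.+2)) (c : nat -> C) :
  v = \sum_(k < m.+1) c k *: fvec q1 q2 m.+2 k -> Lperp q1 q2 v.
Proof.
move=> ->; rewrite /Lperp formf0.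
under eq_bigr => j _ do rewrite summxE mulr_suml.
rewrite exchange_big big1 // => k _.
have := partB R q1 q2 m.+2 hq1 k (ltn_ord k); rewrite /Lperp formf0 => h.
under eq_bigr => j _ do rewrite scE -mulrA.
by rewrite -mulr_sumr h mulr0.
Qed.

Lemma partD1 (v : 'cV[C]_(m.+2)) : Lperp q1 q2 v ->
  exists c : nat -> C, v = \sum_(k < m.+1) c k *: fvec q1 q2 m.+2 k.
Proof.
rewrite /Lperp formf0 => hv.
pose u j := v (inord j) 0 * q ^+ j.
pose P k := \sum_(0 <= j < k.+1) u j.
have huv : forall r : 'I_m.+2, u r = v r 0 * q ^+ r by move=> r; rewrite /u inord_val.
have PS : forall k, P k.+1 = P k + u k.+1 by move=> k; rewrite /P big_nat_recr.
have P0 : P 0 = u 0 by rewrite /P big_nat1.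
have hP : P m.+1 = 0.
  apply: etrans hv; rewrite /P big_mkord; apply: eq_bigr => j _; by rewrite huv.
have hqq := hq _ _ _ hq1 hq2.
exists (fun k => P k / (q2 * q ^+ k)).
apply/matrixP => r z; rewrite [z]ord1 summxE.
under eq_bigr => k _ do rewrite scE mxE.
rewrite -(big_mkord xpredT (fun k => P k / (q2 * q ^+ k) *
  (if (r : nat) == k then q2 else if (r : nat) == k.+1 then q1 else 0))).
rewrite (eq_bigr (fun k => (if (r : nat) == k then P k / (q2 * q ^+ k) * q2 else 0) +
   (if (r : nat) == k.+1 then P k / (q2 * q ^+ k) * q1 else 0))); last first.
  move=> k _; case: (eqVneq (r : nat) k) => [->|_].
    by rewrite (ltn_eqF (ltnSn k)) addr0.
  by rewrite add0r; case: ifP; rewrite ?mulr0.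
rewrite big_split /= L1 L2.
case: r => r hr /=.
have hu := huv (Ordinal hr); rewrite /= in hu.
case: r hr hu => [|s] hr hu /=.
  rewrite addr0 P0 hu expr0 mulr1; field; exact: hq2.
rewrite ltnS.
case: (ltngtP s m) => hs.
- rewrite ltnS (ltnW hs) PS hu exprS.
  have hQ : q ^+ s != 0 by rewrite expf_neq0.
  move: hQ; move: (q ^+ s) (P s) => Q Ps hQ; move: hqq; rewrite /qpar => hqq.
  by field; rewrite hQ hq2 hq1.
- by have := hr; rewrite !ltnS leqNgt hs.
- subst s; rewrite ltnSn add0r.
  have hPm : P m = - u m.+1 by apply/eqP; rewrite -addr_eq0 -PS hP.
  rewrite hPm hu exprS.
  have hQ : q ^+ m != 0 by rewrite expf_neq0.
  move: hQ; move: (q ^+ m) => Q hQ; move: hqq; rewrite /qpar => hqq.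
  by field; rewrite hQ hq2 hq1.
Qed.

End D.

Theorem lemma3p5 (R : realType) (n : nat) (q1 q2 : R[i]) :
  (2 <= n)%N -> q1 * q2 != 0 -> q1 != q2 ->
  (forall i : nat, (i.+1 < n)%N ->
     (Smat q1 q2 n i)^T *m Jmat q1 q2 n *m Smat q1 q2 n i = Jmat q1 q2 n) /\
  (forall i : nat, (i.+1 < n)%N ->
     [/\ Smat q1 q2 n i *m f0 R n = f0 R n,
         Lperp q1 q2 (fvec q1 q2 n i) &
         (forall v : 'cV[R[i]]_n, Lperp q1 q2 v -> Lperp q1 q2 (burau q1 q2 n i *m v))]) /\
  (forall v : 'cV[R[i]]_n, Lperp q1 q2 v <->
     exists c : nat -> R[i], v = \sum_(k < n.-1) c k *: fvec q1 q2 n k).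
Proof.
move=> hn h12 hne.
have hq1 : q1 != 0 by move: h12; rewrite mulf_eq0 negb_or => /andP[].
have hq2 : q2 != 0 by move: h12; rewrite mulf_eq0 negb_or => /andP[].
have hq12 : q1 - q2 != 0 by rewrite subr_eq0.
split; [|split].
- by move=> i hi; exact: (part1 R q1 q2 n hq1 hq2 hq12 i hi).
- move=> i hi; split.
  + exact: (partA R q1 q2 n hq12 i hi).
  + exact: (partB R q1 q2 n hq1 i hi).
  + exact: (partC R q1 q2 n hq1 i hi).
- case: n hn => [|[|m]] // _ v; split.
  + exact: (partD1 R q1 q2 m hq1 hq2 v).
  + by case=> c hc; exact: (partD2 R q1 q2 m hq1 v c hc).
Qed.
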